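(* Identify $\mathbb{Z}^4$ with $\mathbb{H}(\mathbb{Z})$ via $(x,y,z,t)\mapsto x+yi+zj+tk$. Let $q_1,q_2\in\mathbb{H}(\mathbb{Z})$ be odd integer quaternions, neither of which is right-divisible in $\mathbb{H}(\mathbb{Z})$ by any quaternion $\alpha+\beta i$ with $\alpha,\beta\in\mathbb{Z}$ and $\alpha^2+\beta^2>1$. Let $u=q_1 j\overline{q_2}=(u_1,u_2,u_3,u_4)$ and $v=q_1 k\overline{q_2}=(v_1,v_2,v_3,v_4)$, and let $\square=\mathrm{conv}\{0,u,v,u+v\}$. Then the area of a fundamental domain of the lattice $\mathbb{Z}^4\cap\operatorname{span}_{\mathbb{R}}\{u,v\}$ equals $\operatorname{lcm}(N(q_1),N(q_2))$, and the Ehrhart polynomial of $\square$ is $$E_\square(t)=\gcd(N(q_1),N(q_2))\,t^2+(D_1+D_2)\,t+1,$$ where $D_1=\gcd(u_1,u_2,u_3,u_4)$ and $D_2=\gcd(v_1,v_2,v_3,v_4)$.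
   Context: $\mathbb{H}(\mathbb{Z})$ denotes quaternions $x+yi+zj+tk$ with $x,y,z,t\in\mathbb{Z}$, with $i^2=j^2=k^2=-1$, $ij=-ji=k$, $jk=-kj=i$, $ki=-ik=j$; $\overline{q}=x-yi-zj-tk$ and $N(q)=x^2+y^2+z^2+t^2$. A quaternion $q$ is odd if $N(q)$ is odd. Right-divisible by $\pi$ means $q=q'\pi$ with $q'\in\mathbb{H}(\mathbb{Z})$. The Ehrhart polynomial of a lattice polytope $P\subset\mathbb{R}^4$ is the polynomial $E_P$ with $E_P(t)=\#(tP\cap\mathbb{Z}^4)$ for all positive integers $t$. *)

(* Defs.v *)
From HB Require Import structures.
From mathcomp Require Import all_boot all_order all_algebra.
Set Implicit Arguments. Unset Strict Implicit. Unset Printing Implicit Defensive.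
Import Order.TTheory GRing.Theory Num.Theory.
Local Open Scope ring_scope.

(* Integer quaternions x + y i + z j + t k, identified with Z^4 = (x,y,z,t). *)
Definition quat := (int * int * int * int)%type.
Definition Quat (x y z t : int) : quat := (x, y, z, t).
Definition qx (q : quat) : int := q.1.1.1.
Definition qy (q : quat) : int := q.1.1.2.
Definition qz (q : quat) : int := q.1.2.
Definition qt (q : quat) : int := q.2.

Definition qcoord (q : quat) (k : nat) : int := nth 0 [:: qx q; qy q; qz q; qt q] k.

Definition qadd (p q : quat) : quat :=
  Quat (qx p + qx q) (qy p + qy q) (qz p + qz q) (qt p + qt q).

(* Hamilton product: i^2=j^2=k^2=-1, ij=k, jk=i, ki=j *)
Definition qmul (p q : quat) : quat :=
  let: (a1, b1, c1, d1) := (qx p, qy p, qz p, qt p) in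
  let: (a2, b2, c2, d2) := (qx q, qy q, qz q, qt q) in
  Quat (a1*a2 - b1*b2 - c1*c2 - d1*d2)
       (a1*b2 + b1*a2 + c1*d2 - d1*c2)
       (a1*c2 - b1*d2 + c1*a2 + d1*b2)
       (a1*d2 + b1*c2 - c1*b2 + d1*a2).

Definition qconj (q : quat) : quat := Quat (qx q) (- qy q) (- qz q) (- qt q).

Definition qnorm (q : quat) : int := qx q ^+ 2 + qy q ^+ 2 + qz q ^+ 2 + qt q ^+ 2.

Definition qj : quat := Quat 0 0 1 0.
Definition qk : quat := Quat 0 0 0 1.

Definition qodd (q : quat) : bool := odd `|qnorm q|%N.

Definition right_divisible (q pi : quat) : Prop := exists q' : quat, q = qmul q' pi.

Definition no_gauss_right_divisor (q : quat) : Prop :=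
  forall alpha beta : int, 1 < alpha ^+ 2 + beta ^+ 2 ->
    ~ right_divisible q (Quat alpha beta 0 0).

Definition qdot (p q : quat) : int :=
  qx p * qx q + qy p * qy q + qz p * qz q + qt p * qt q.

Definition in_rspan (R : rcfType) (u v w : quat) : Prop :=
  exists c d : R, forall k : nat, (k < 4)%N ->
    (qcoord w k)%:~R = c * (qcoord u k)%:~R + d * (qcoord v k)%:~R.

Definition is_lattice_basis (R : rcfType) (u v a b : quat) : Prop :=
  in_rspan R u v a /\ in_rspan R u v b /\
  forall w : quat, in_rspan R u v w <->
    exists m n : int, forall k : nat, (k < 4)%N ->
      qcoord w k = m * qcoord a k + n * qcoord b k.

(* area of the fundamental parallelogram spanned by a, b in R^4:
   sqrt of the Gram determinant *)
Definition par_area (R : rcfType) (a b : quat) : R :=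
  Num.sqrt ((qdot a a * qdot b b - qdot a b ^+ 2)%:~R).

Definition in_dil_conv (R : rcfType) (t : nat) (ps : seq quat) (w : quat) : Prop :=
  exists l : seq R, size l = size ps /\ (forall i, (i < size l)%N -> 0 <= l`_i) /\
    \sum_(i < size ps) l`_i = 1 /\
    forall k : nat, (k < 4)%N ->
      (qcoord w k)%:~R = t%:R * \sum_(i < size ps) l`_i * (qcoord (nth 0 ps i) k)%:~R.

Definition lattice_count (R : rcfType) (t : nat) (ps : seq quat) (n : nat) : Prop :=
  exists s : seq quat, uniq s /\ (forall w, w \in s <-> in_dil_conv R t ps w) /\
    size s = n.

Definition gcd4 (q : quat) : int := gcdz (gcdz (gcdz (qx q) (qy q)) (qz q)) (qt q).

(* Main.v *)
Require Import Defs.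
From HB Require Import structures.
From mathcomp Require Import all_boot all_order all_algebra.
From mathcomp Require Import zify ring lra.
Import Order.TTheory GRing.Theory Num.Theory.
Local Open Scope ring_scope.

Lemma quat_eta (q : quat) : q = Quat (qx q) (qy q) (qz q) (qt q).
Proof. by case: q => [[[a b] c] d]. Qed.

Lemma quatE (p q : quat) : qx p = qx q -> qy p = qy q -> qz p = qz q -> qt p = qt q -> p = q.
Proof. by case: p => [[[a b] c] d]; case: q => [[[a' b'] c'] d']; rewrite /qx /qy /qz /qt /= => -> -> -> ->. Qed.

Lemma all4 (P : nat -> Prop) : P 0%N -> P 1%N -> P 2%N -> P 3%N -> forall k, (k < 4)%N -> P k.
Proof. by move=> ? ? ? ? [|[|[|[|k]]]]. Qed.

Definition mnr (u v : quat) (i j : nat) : int :=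
  qcoord u i * qcoord v j - qcoord u j * qcoord v i.

Definition qlin (m : int) (a : quat) (n : int) (b : quat) : quat :=
  Quat (m * qx a + n * qx b) (m * qy a + n * qy b) (m * qz a + n * qz b) (m * qt a + n * qt b).

Definition inL (u v : quat) (P : int) (w : quat) : Prop :=
  forall k, (k < 4)%N -> P * qcoord w k = qdot w u * qcoord u k + qdot w v * qcoord v k.

Definition ideal_prop (u v : quat) (g : int) : Prop :=
  forall Qp : int -> Prop, (forall x y, Qp x -> Qp y -> Qp (x + y)) ->
   (forall c x, Qp x -> Qp (c * x)) ->
   (forall i j, (i < 4)%N -> (j < 4)%N -> Qp (mnr u v i j)) -> Qp g.

Lemma gcd4_ge0 q : 0 <= gcd4 q.
Proof. by rewrite /gcd4 /gcdz. Qed.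

Lemma gcd4_dvd q : [/\ (gcd4 q %| qx q)%Z, (gcd4 q %| qy q)%Z, (gcd4 q %| qz q)%Z & (gcd4 q %| qt q)%Z].
Proof.
rewrite /gcd4; set G2 := gcdz (qx q) (qy q); set G3 := gcdz G2 (qz q).
have h3 : (gcdz G3 (qt q) %| G3)%Z := dvdz_gcdl _ _.
have h2 : (G3 %| G2)%Z := dvdz_gcdl _ _.
split.
- exact: (dvdz_trans h3 (dvdz_trans h2 (dvdz_gcdl _ _))).
- exact: (dvdz_trans h3 (dvdz_trans h2 (dvdz_gcdr _ _))).
- exact: (dvdz_trans h3 (dvdz_gcdr _ _)).
- exact: dvdz_gcdr.
Qed.

Lemma dvd_gcd4 d q : (d %| qx q)%Z -> (d %| qy q)%Z -> (d %| qz q)%Z -> (d %| qt q)%Z ->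
  (d %| gcd4 q)%Z.
Proof. by move=> Hx Hy Hz Ht; rewrite /gcd4 !dvdz_gcd Hx Hy Hz Ht. Qed.

Lemma gcd4_bez q : exists y : quat, qdot y q = gcd4 q.
Proof.
rewrite /gcd4.
have [a [b Hab]] := Bezoutz (qx q) (qy q).
have [c [d Hcd]] := Bezoutz (gcdz (qx q) (qy q)) (qz q).
have [e [f Hef]] := Bezoutz (gcdz (gcdz (qx q) (qy q)) (qz q)) (qt q).
exists (Quat (e*c*a) (e*c*b) (e*d) f).
rewrite -Hef -Hcd -Hab /qdot /qx /qy /qz /qt /=. ring.
Qed.

Lemma span_iff (R : rcfType) u v P w : qdot u v = 0 -> qdot u u = P -> qdot v v = P -> P != 0 ->
  in_rspan R u v w <-> inL u v P w.
Proof.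
move=> Huv Huu Hvv P0; split.
- case=> c [d H].
  have H0 := H 0%N isT; have H1 := H 1%N isT; have H2 := H 2%N isT; have H3 := H 3%N isT.
  rewrite /qcoord /= in H0 H1 H2 H3.
  have Es : (qdot w u)%:~R = c * P%:~R :> R.
    transitivity (c * (qdot u u)%:~R + d * (qdot u v)%:~R); last by rewrite Huv Huu; ring.
    rewrite /qdot !rmorphD !rmorphM /= H0 H1 H2 H3; ring.
  have Er : (qdot w v)%:~R = d * P%:~R :> R.
    transitivity (c * (qdot u v)%:~R + d * (qdot v v)%:~R); last by rewrite Huv Hvv; ring.
    rewrite /qdot !rmorphD !rmorphM /= H0 H1 H2 H3; ring.
  move=> k Hk; apply: (intr_inj (R := R)).
  rewrite !rmorphD !rmorphM /= Es Er (H k Hk); ring.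
- move=> H.
  have P0' : P%:~R != 0 :> R by rewrite intr_eq0.
  exists ((qdot w u)%:~R / P%:~R), ((qdot w v)%:~R / P%:~R) => k Hk.
  have := H k Hk => /(congr1 (fun x : int => x%:~R : R)).
  rewrite rmorphD !rmorphM /=.
  move: (qdot w u) (qdot w v) (qcoord w k) (qcoord u k) (qcoord v k) => s r a b c E.
  apply: (mulfI P0'); rewrite E; field; exact: P0'.
Qed.

Lemma dvdzD d x y : (d %| x)%Z -> (d %| y)%Z -> (d %| x + y)%Z.
Proof. by move=> /dvdzP [a ->] /dvdzP [b ->]; apply/dvdzP; exists (a + b); ring. Qed.
Lemma dvdzB d x y : (d %| x)%Z -> (d %| y)%Z -> (d %| x - y)%Z.
Proof. by move=> /dvdzP [a ->] /dvdzP [b ->]; apply/dvdzP; exists (a - b); ring. Qed.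

Definition qscale (c : int) (a : quat) : quat := Quat (c * qx a) (c * qy a) (c * qz a) (c * qt a).

Ltac qunf := rewrite ?/qdot ?/qscale ?/qlin ?/mnr ?/qcoord /qx /qy /qz /qt /=.

Lemma qdot_scale_l c a w : qdot (qscale c a) w = c * qdot a w.
Proof. qunf; ring. Qed.
Lemma qdot_lin_l m a n b w : qdot (qlin m a n b) w = m * qdot a w + n * qdot b w.
Proof. qunf; ring. Qed.
Lemma qdot_scale2 c a d b : qdot (qscale c a) (qscale d b) = c * d * qdot a b.
Proof. qunf; ring. Qed.
Lemma qdot_lin2 m a n b m' a' n' b' : qdot (qlin m a n b) (qlin m' a' n' b') =
  m * m' * qdot a a' + m * n' * qdot a b' + n * m' * qdot b a' + n * n' * qdot b b'.
Proof. qunf; ring. Qed.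
Lemma qdotC a w : qdot a w = qdot w a.
Proof. qunf; ring. Qed.
Lemma qcoord_scale c a k : (k < 4)%N -> qcoord (qscale c a) k = c * qcoord a k.
Proof. by case: k => [|[|[|[|k]]]] //. Qed.
Lemma qcoord_lin m a n b k : (k < 4)%N -> qcoord (qlin m a n b) k = m * qcoord a k + n * qcoord b k.
Proof. by case: k => [|[|[|[|k]]]] //. Qed.

Lemma quatE4 (p q : quat) : (forall k, (k < 4)%N -> qcoord p k = qcoord q k) -> p = q.
Proof. move=> H; apply: quatE; [exact: (H 0%N)|exact: (H 1%N)|exact: (H 2%N)|exact: (H 3%N)]. Qed.

Lemma dvd_coord d q : (d %| qx q)%Z -> (d %| qy q)%Z -> (d %| qz q)%Z -> (d %| qt q)%Z ->
  forall k, (d %| qcoord q k)%Z.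
Proof. by move=> ? ? ? ? [|[|[|[|k]]]] //=; rewrite /qcoord nth_default. Qed.

Lemma gcd4_pos q : 0 < qdot q q -> 0 < gcd4 q.
Proof.
move=> Hq; have [dx dy dz dt] := gcd4_dvd q.
have : 0 <= gcd4 q by exact: gcd4_ge0.
rewrite le0r => /orP [/eqP D0|//].
have z0 : forall x, (gcd4 q %| x)%Z -> x = 0.
  by move=> x /dvdzP [c ->]; rewrite D0 mulr0.
move: Hq; rewrite /qdot (z0 _ dx) (z0 _ dy) (z0 _ dz) (z0 _ dt).
by rewrite !mulr0 !addr0 ltxx.
Qed.

Lemma gcd4_scale q : exists q', qscale (gcd4 q) q' = q.
Proof.
have [dx dy dz dt] := gcd4_dvd q.
exists (Quat (qx q %/ gcd4 q)%Z (qy q %/ gcd4 q)%Z (qz q %/ gcd4 q)%Z (qt q %/ gcd4 q)%Z).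
by apply: quatE; qunf; rewrite mulrC divzK.
Qed.

Definition setup (u v : quat) (P g : int) : Prop :=
  [/\ qdot u v = 0, qdot u u = P, qdot v v = P, 0 < P &
      [/\ 0 < g, (g %| P)%Z, (forall i j, (g %| mnr u v i j)%Z) & ideal_prop u v g]].

Lemma lattice_data u v P g : setup u v P g ->
  exists (a b : quat) (K h Y : int),
  [/\ P = K * g, g = h * gcd4 u, 0 < K, 0 < h & 0 < gcd4 u] /\
    (forall m n, [/\ inL u v P (qlin m a n b),
        qdot (qlin m a n b) u = K * (m * h - n * Y) &
        qdot (qlin m a n b) v = K * gcd4 u * n]) /\
    (forall w, inL u v P w -> exists m n, w = qlin m a n b) /\
    qdot a a * qdot b b - qdot a b ^+ 2 = K ^+ 2.
Proof.
case=> Huv Huu Hvv HP [Hg HgP Hgm Hid].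
set D1 := gcd4 u.
have [dx dy dz dt] := gcd4_dvd u; rewrite -/D1 in dx dy dz dt.
have dU := dvd_coord _ _ dx dy dz dt.
have D1pos : 0 < D1.
  have : 0 <= D1 by exact: gcd4_ge0.
  rewrite le0r => /orP [/eqP D0|//].
  have z0 : forall x, (D1 %| x)%Z -> x = 0.
    by move=> x /dvdzP [c ->]; rewrite D0 mulr0.
  move: Huu HP; rewrite /qdot (z0 _ dx) (z0 _ dy) (z0 _ dz) (z0 _ dt) => <-.
  by rewrite !mulr0 !addr0 ltxx.
have [y Hy] := gcd4_bez u; rewrite -/D1 in Hy.
have D1g : (D1 %| g)%Z.
  apply: (Hid (fun x => (D1 %| x)%Z)) => [x z|c x|i j _ _]; first exact: dvdzD.
    exact: dvdz_mull.
  by rewrite /mnr; apply: dvdzB; apply: dvdz_mulr.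
have [h Eg] := dvdzP D1g.
have hpos : 0 < h by nia.
have [K EP] := dvdzP HgP.
have Kpos : 0 < K by nia.
set a := Quat (qx u %/ D1)%Z (qy u %/ D1)%Z (qz u %/ D1)%Z (qt u %/ D1)%Z.
have Eu : qscale D1 a = u.
  by apply: quatE; qunf; rewrite mulrC divzK.
set Y := qdot y v.
have gb : forall k, (g %| D1 * qcoord v k - Y * qcoord u k)%Z.
  move=> k.
  have -> : D1 * qcoord v k - Y * qcoord u k =
    qx y * mnr u v 0 k + qy y * mnr u v 1 k + qz y * mnr u v 2 k + qt y * mnr u v 3 k.
    by rewrite -Hy /Y; qunf; ring.
  by rewrite !dvdzD // dvdz_mull.
set b := Quat ((D1 * qx v - Y * qx u) %/ g)%Z ((D1 * qy v - Y * qy u) %/ g)%Z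
   ((D1 * qz v - Y * qz u) %/ g)%Z ((D1 * qt v - Y * qt u) %/ g)%Z.
have Eb : qscale g b = qlin D1 v (- Y) u.
  apply: quatE; qunf; rewrite mulrC divzK;
    first [ring | exact: (gb 0%N) | exact: (gb 1%N) | exact: (gb 2%N) | exact: (gb 3%N)].
have D1n0 : D1 != 0 by rewrite gt_eqF.
have gn0 : g != 0 by rewrite gt_eqF.
have Pn0 : P != 0 by rewrite gt_eqF.
have au : qdot a u = K * h.
  by apply: (mulfI D1n0); rewrite -qdot_scale_l Eu Huu EP Eg; ring.
have av : qdot a v = 0.
  by apply: (mulfI D1n0); rewrite -qdot_scale_l Eu Huv mulr0.
have bu : qdot b u = - (Y * K).
  apply: (mulfI gn0); rewrite -qdot_scale_l Eb qdot_lin_l (qdotC v u) Huv Huu EP; ring.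
have bv : qdot b v = K * D1.
  apply: (mulfI gn0); rewrite -qdot_scale_l Eb qdot_lin_l Hvv Huv EP; ring.
have Pa : forall k, (k < 4)%N -> P * qcoord a k = K * h * qcoord u k.
  move=> k Hk; have := congr1 (qcoord^~ k) Eu; rewrite /= qcoord_scale // => <-.
  by rewrite EP Eg; ring.
have Pb : forall k, (k < 4)%N -> P * qcoord b k = K * (D1 * qcoord v k - Y * qcoord u k).
  move=> k Hk; have := congr1 (qcoord^~ k) Eb; rewrite /= qcoord_scale // qcoord_lin // => E.
  by rewrite EP -mulrA E; ring.
exists a, b, K, h, Y; split; first by [].
split.
  move=> m n; split.
  - move=> k Hk; rewrite qcoord_lin // !qdot_lin_l au av bu bv.
    transitivity (m * (P * qcoord a k) + n * (P * qcoord b k)); first by ring.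
    rewrite Pa // Pb //; ring.
  - by rewrite qdot_lin_l au bu; ring.
  - by rewrite qdot_lin_l av bv; ring.
split.
  move=> w Hw.
  set s := qdot w u; set r := qdot w v.
  have Hm : forall i j, (i < 4)%N -> (j < 4)%N ->
      r * mnr u v i j = P * (qcoord u i * qcoord w j - qcoord u j * qcoord w i).
    move=> i j Hi Hj; rewrite /mnr.
    transitivity (qcoord u i * (P * qcoord w j) - qcoord u j * (P * qcoord w i)); last by ring.
    rewrite (Hw j Hj) (Hw i Hi); ring.
  have rg : (P * D1 %| r * g)%Z.
    apply: (Hid (fun x => (P * D1 %| r * x)%Z)) => [x z Hx Hz|c x Hx|i j Hi Hj].
    - rewrite mulrDr; exact: dvdzD.
    - rewrite mulrCA; exact: dvdz_mull.
    - rewrite Hm //; apply: dvdz_mul; first exact: dvdzz.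
      by apply: dvdzB; apply: dvdz_mulr; apply: dU.
  have [n En] := dvdzP rg.
  have Er : r = n * K * D1 by apply: (mulIf gn0); rewrite En EP; ring.
  set w' := qlin 1 w (- n) b.
  have Pw' : forall k, (k < 4)%N -> P * qcoord w' k = (s + n * K * Y) * qcoord u k.
    move=> k Hk; rewrite qcoord_lin //.
    transitivity (P * qcoord w k - n * (P * qcoord b k)); first by ring.
    rewrite Hw // Pb // -/s -/r Er; ring.
  set m := qdot y w'.
  have Pm : P * m = (s + n * K * Y) * D1.
    have := Pw' 0%N isT; have := Pw' 1%N isT; have := Pw' 2%N isT; have := Pw' 3%N isT.
    rewrite /qcoord /= => e3 e2 e1 e0.
    rewrite -Hy /m /qdot.
    transitivity (qx y * (P * qx w') + qy y * (P * qy w') + qz y * (P * qz w') + qt y * (P * qt w'));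
      first by ring.
    rewrite e0 e1 e2 e3; ring.
  have Khm : K * h * m = s + n * K * Y.
    by apply: (mulIf D1n0); rewrite -Pm EP Eg; ring.
  exists m, n; apply: quatE4 => k Hk; apply: (mulfI Pn0).
  rewrite qcoord_lin // Hw // -/s -/r.
  transitivity (m * (P * qcoord a k) + n * (P * qcoord b k)); last by ring.
  rewrite Pa // Pb // Er.
  have -> : s = K * h * m - n * K * Y by rewrite Khm; ring.
  ring.
have Eaa : D1 * D1 * qdot a a = P by rewrite -qdot_scale2 Eu Huu.
have Ebb : g * g * qdot b b = D1 * D1 * P + Y * Y * P.
  by rewrite -qdot_scale2 Eb qdot_lin2 Huu Hvv qdotC Huv; ring.
have Eab : D1 * g * qdot a b = - (Y * P).
  by rewrite -qdot_scale2 Eu Eb qdotC qdot_lin_l qdotC Huv Huu; ring.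
have Dg : (D1 * g) ^+ 2 != 0 by rewrite expf_neq0 // mulf_neq0.
apply: (mulfI Dg).
transitivity ((D1 * D1 * qdot a a) * (g * g * qdot b b) - (D1 * g * qdot a b) ^+ 2); first by ring.
rewrite Eaa Ebb Eab EP; ring.
Qed.

Lemma dot_real (R : rcfType) u v P w (c d : R) : qdot u v = 0 -> qdot u u = P -> qdot v v = P ->
  (forall k, (k < 4)%N -> (qcoord w k)%:~R = c * (qcoord u k)%:~R + d * (qcoord v k)%:~R) ->
  (qdot w u)%:~R = c * P%:~R /\ (qdot w v)%:~R = d * P%:~R.
Proof.
move=> Huv Huu Hvv H.
have H0 := H 0%N isT; have H1 := H 1%N isT; have H2 := H 2%N isT; have H3 := H 3%N isT.
rewrite /qcoord /= in H0 H1 H2 H3; split.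
- transitivity (c * (qdot u u)%:~R + d * (qdot u v)%:~R); last by rewrite Huv Huu; ring.
  rewrite /qdot !rmorphD !rmorphM /= H0 H1 H2 H3; ring.
- transitivity (c * (qdot u v)%:~R + d * (qdot v v)%:~R); last by rewrite Huv Hvv; ring.
  rewrite /qdot !rmorphD !rmorphM /= H0 H1 H2 H3; ring.
Qed.

Lemma qcoord_add u v k : (k < 4)%N -> qcoord (qadd u v) k = qcoord u k + qcoord v k.
Proof. by case: k => [|[|[|[|k]]]]. Qed.

Lemma dil_iff (R : rcfType) u v P (t : nat) w : qdot u v = 0 -> qdot u u = P -> qdot v v = P ->
  0 < P -> (0 < t)%N ->
  in_dil_conv R t [:: Quat 0 0 0 0; u; v; qadd u v] w <->
  [/\ inL u v P w, 0 <= qdot w u <= t%:Z * P & 0 <= qdot w v <= t%:Z * P].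
Proof.
move=> Huv Huu Hvv HP Ht.
have Pn0 : P != 0 by rewrite gt_eqF.
have PR : 0 < P%:~R :> R by rewrite ltr0z.
have tR : 0 < t%:R :> R by rewrite ltr0n.
have tz : (t%:Z)%:~R = t%:R :> R by [].
split.
- case=> l [Hs [Hl [Hsum Hw]]].
  move: Hs Hl Hsum Hw; case: l => [|l0 [|l1 [|l2 [|l3 [|? ?]]]]] //= _ Hl.
  rewrite !big_ord_recl big_ord0 /= => Hsum Hw.
  have p0 := Hl 0%N isT; have p1 := Hl 1%N isT; have p2 := Hl 2%N isT; have p3 := Hl 3%N isT.
  rewrite /= in p0 p1 p2 p3.
  have Hw' : forall k, (k < 4)%N -> (qcoord w k)%:~R =
      (t%:R * (l1 + l3)) * (qcoord u k)%:~R + (t%:R * (l2 + l3)) * (qcoord v k)%:~R :> R.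
    move=> k Hk; rewrite Hw // !big_ord_recl big_ord0 /= qcoord_add //.
    have -> : qcoord (Quat 0 0 0 0) k = 0 by case: (k) Hk => [|[|[|[|?]]]].
    rewrite /bump /= rmorphD /=; ring.
  have [Es Er] := @dot_real R u v P w _ _ Huv Huu Hvv Hw'.
  have Hin : in_rspan R u v w by exists (t%:R * (l1 + l3)), (t%:R * (l2 + l3)).
  split; first by rewrite -(@span_iff R u v P w Huv Huu Hvv Pn0).
  + apply/andP; split; rewrite -(ler_int R) Es ?rmorphM /= ?tz ?mul0rz.
    * by rewrite !mulr_ge0 // ?addr_ge0 // ltW.
    * have : l1 + l3 <= 1 by lra.
      move: (t%:R) (P%:~R) tR PR => a b ha hb hl.
      have hab : 0 < a * b by rewrite mulr_gt0.
      rewrite -subr_ge0 (_ : _ - _ = (1 - (l1 + l3)) * (a * b)); last by ring.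
      by rewrite mulr_ge0 ?subr_ge0 // ltW.
  + apply/andP; split; rewrite -(ler_int R) Er ?rmorphM /= ?tz ?mul0rz.
    * by rewrite !mulr_ge0 // ?addr_ge0 // ltW.
    * have : l2 + l3 <= 1 by lra.
      move: (t%:R) (P%:~R) tR PR => a b ha hb hl.
      have hab : 0 < a * b by rewrite mulr_gt0.
      rewrite -subr_ge0 (_ : _ - _ = (1 - (l2 + l3)) * (a * b)); last by ring.
      by rewrite mulr_ge0 ?subr_ge0 // ltW.
- case=> Hin /andP [s0 s1] /andP [r0 r1].
  set T := t%:R * P%:~R : R.
  have Tp : 0 < T by rewrite mulr_gt0.
  have Tn0 : T != 0 by rewrite gt_eqF.
  set x := (qdot w u)%:~R / T; set y := (qdot w v)%:~R / T.
  have x0 : 0 <= x by rewrite divr_ge0 // ?ler0z // ltW.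
  have y0 : 0 <= y by rewrite divr_ge0 // ?ler0z // ltW.
  have x1 : x <= 1.
    by rewrite ler_pdivrMr // mul1r /T -tz -rmorphM ler_int.
  have y1 : y <= 1.
    by rewrite ler_pdivrMr // mul1r /T -tz -rmorphM ler_int.
  have PRn : P%:~R != 0 :> R by rewrite gt_eqF.
  have key : forall k, (k < 4)%N -> (qcoord w k)%:~R =
      t%:R * (x * (qcoord u k)%:~R + y * (qcoord v k)%:~R) :> R.
    move=> k Hk; apply: (mulfI PRn).
    have := Hin k Hk => /(congr1 (fun z : int => z%:~R : R)).
    rewrite rmorphD !rmorphM /= => ->.
    rewrite /x /y /T; field.
    by rewrite PRn gt_eqF.
  have z0 : forall k, qcoord (Quat 0 0 0 0) k = 0 by move=> [|[|[|[|k]]]] //; rewrite /qcoord nth_default.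
  rewrite /in_dil_conv; exists (if x <= y then [:: 1 - y; 0; y - x; x] else [:: 1 - x; x - y; 0; y]).
  case: ifP => Hxy.
  + split => //; split; first by move=> [|[|[|[|i]]]] //= _; lra.
    split; first by rewrite !big_ord_recl big_ord0 /=; ring.
    move=> k Hk; rewrite key // !big_ord_recl big_ord0 /= qcoord_add // z0 rmorphD /=; ring.
  + move/negbT: Hxy; rewrite -ltNge => Hxy.
    split => //; split; first by move=> [|[|[|[|i]]]] //= _; lra.
    split; first by rewrite !big_ord_recl big_ord0 /=; ring.
    move=> k Hk; rewrite key // !big_ord_recl big_ord0 /= qcoord_add // z0 rmorphD /=; ring.
Qed.

Lemma mem_shift (lo : int) (len : nat) m :
  (m \in [seq lo + j%:Z | j <- iota 0 len]) = (lo <= m < lo + len%:Z).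
Proof.
apply/mapP/idP.
- case=> j; rewrite mem_iota add0n => /andP [_ Hj] ->; apply/andP; split; lia.
- move=> /andP [h1 h2]; exists (`|m - lo|%N); last by lia.
  rewrite mem_iota; apply/andP; split; lia.
Qed.

Definition mlist (h c : int) (L : nat) : seq int :=
  [seq ((c %/ h)%Z + (if (h %| c)%Z then 0 else 1)) + j%:Z | j <- iota 0 (L + (if (h %| c)%Z then 1 else 0))].

Lemma mlistP h c L m : 0 < h -> (m \in mlist h c L) = (0 <= m * h - c <= L%:Z * h).
Proof.
move=> hp; rewrite /mlist mem_shift.
have E := divz_eq c h.
have r0 : 0 <= (c %% h)%Z by rewrite modz_ge0 // gt_eqF.
have r1 : (c %% h)%Z < h by rewrite ltz_pmod.
move: E r0 r1; set q := (c %/ h)%Z; set rho := (c %% h)%Z => E r0 r1.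
case: ifP => Hd.
- have rz : rho = 0 by apply/dvdz_mod0P.
  rewrite E rz addr0; apply/idP/idP => /andP [H1 H2]; apply/andP; split; nia.
- have rp : rho != 0 by apply: contraFneq Hd => rz; apply/dvdz_mod0P.
  have rp' : 0 < rho by rewrite lt0r rp.
  rewrite E; apply/idP/idP => /andP [H1 H2]; apply/andP; split; nia.
Qed.

Lemma mlist_uniq h c L : uniq (mlist h c L).
Proof. by rewrite /mlist map_inj_uniq ?iota_uniq // => i j /addrI [->]. Qed.

Lemma size_mlist h c L : size (mlist h c L) = (L + (if (h %| c)%Z then 1 else 0))%N.
Proof. by rewrite /mlist size_map size_iota. Qed.

Lemma sumn_shift (L : nat) (f : nat -> nat) s k :
  sumn [seq (L + f n)%N | n <- iota s k] = (k * L + sumn [seq f n | n <- iota s k])%N.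
Proof.
elim: k s => [|k IH] s //=.
by rewrite IH mulSn; lia.
Qed.

Lemma count_mult (q0 k : nat) : (0 < q0)%N ->
  count (fun n => q0 %| n)%N (iota 0 (k * q0).+1) = k.+1.
Proof.
case: q0 => // q1 _; elim: k => [|k IH]; first by rewrite mul0n /=; case: (q1.+1 %| 0)%N (dvdn0 q1.+1).
have -> : ((k.+1 * q1.+1).+1 = (k * q1.+1).+1 + q1 + 1)%N by rewrite mulSn; lia.
rewrite !iotaD !count_cat IH add0n /=.
have -> : (count (fun n => q1.+1 %| n)%N (iota (k * q1.+1).+1 q1) = 0)%N.
  apply/eqP; rewrite -leqn0 leqNgt -has_count; apply/hasPn => x.
  rewrite mem_iota => /andP [h1 h2]; apply/negP => /dvdnP [z Ez].
  rewrite Ez in h1 h2.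
  have : (k < z)%N by rewrite -(@ltn_pmul2r q1.+1) //; lia.
  have : (z < k.+1)%N by rewrite -(@ltn_pmul2r q1.+1) //; lia.
  lia.
have -> : ((k * q1.+1).+1 + q1 = k.+1 * q1.+1)%N by rewrite mulSn; lia.
by rewrite add0n dvdn_mull ?dvdnn //; lia.
Qed.

Lemma count_hY (h : nat) (Y : int) (t : nat) : (0 < h)%N ->
  count (fun n : nat => ((h%:Z) %| (n%:Z * Y))%Z) (iota 0 (t * h).+1) = (t * gcdn h `|Y|).+1.
Proof.
move=> hp.
set e := gcdn h `|Y|.
have ep : (0 < e)%N by rewrite gcdn_gt0 hp.
set q0 := (h %/ e)%N; set Y' := (`|Y| %/ e)%N.
have Eh : h = (q0 * e)%N by rewrite divnK // dvdn_gcdl.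
have EY : `|Y|%N = (Y' * e)%N by rewrite divnK // dvdn_gcdr.
have cop : coprime q0 Y'.
  rewrite /coprime; apply/eqP.
  have : (gcdn q0 Y' * e = e)%N by rewrite muln_gcdl -Eh -EY.
  by rewrite -{2}[e]mul1n => /eqP; rewrite eqn_pmul2r // => /eqP.
have q0p : (0 < q0)%N by move: hp; rewrite Eh muln_gt0 => /andP [].
rewrite (eq_count (a2 := fun n => q0 %| n)%N).
  have -> : (t * h = (t * e) * q0)%N by rewrite Eh; lia.
  exact: count_mult.
move=> n /=; rewrite dvdzE abszM /= EY {1}Eh mulnA dvdn_pmul2r //.
exact: Gauss_dvdl.
Qed.

Lemma sumn_ind (p : pred nat) s : sumn [seq (if p n then 1 else 0)%N | n <- s] = count p s.
Proof. by elim: s => //= x s ->; case: (p x). Qed.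

Lemma dvdz_anti_ge0 (x y : int) : 0 <= x -> 0 <= y -> (x %| y)%Z -> (y %| x)%Z -> x = y.
Proof.
move=> x0 y0; rewrite !dvdzE => H1 H2.
rewrite -(gez0_abs x0) -(gez0_abs y0); congr Posz; apply/eqP; rewrite eqn_dvd H1 H2.
by [].
Qed.

Lemma count_main (R : rcfType) u v P g (t : nat) : setup u v P g -> (0 < t)%N ->
  exists n : nat, lattice_count R t [:: Quat 0 0 0 0; u; v; qadd u v] n /\
     n%:Z = g * t%:Z ^+ 2 + (gcd4 u + gcd4 v) * t%:Z + 1.
Proof.
move=> S tp; have S' := S; case: S' => Huv Huu Hvv HP [Hg HgP Hgm Hid].
have [a [b [K [h [Y [[EP Eg Kp hp D1p] [Hlin [Hdec _]]]]]]]] := lattice_data _ _ _ _ S.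
move: Eg D1p Hlin; set D1 := gcd4 u => Eg D1p Hlin.
have Kn0 : K != 0 by rewrite gt_eqF.
have hn0 : h != 0 by rewrite gt_eqF.
have D1n0 : D1 != 0 by rewrite gt_eqF.
set hn := `|h|%N; set D1n := `|D1|%N.
have hE : h = hn%:Z by rewrite /hn gez0_abs // ltW.
have D1E : D1 = D1n%:Z by rewrite /D1n gez0_abs // ltW.
have D2E : gcd4 v = (gcdn hn `|Y|)%:Z.
  have eE : (gcdn hn `|Y|)%:Z = gcdz h Y by [].
  rewrite eE; set e' := gcdz h Y.
  have vp : 0 < gcd4 v by apply: gcd4_pos; rewrite Hvv.
  apply: dvdz_anti_ge0; [exact: gcd4_ge0 | by [] | |].
  - have [vt Evt] := gcd4_scale v.
    move: vp Evt; set D2 := gcd4 v => vp Evt.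
    have D2n0 : D2 != 0 by rewrite gt_eqF.
    have vtu : qdot vt u = 0.
      by apply: (mulfI D2n0); rewrite -qdot_scale_l Evt qdotC Huv mulr0.
    have vtv : D2 * qdot vt v = P by rewrite -qdot_scale_l Evt Hvv.
    have HLv : inL u v P vt.
      move=> k Hk; apply: (mulfI D2n0); rewrite vtu mul0r add0r.
      have := congr1 (qcoord^~ k) Evt; rewrite /= qcoord_scale // => Ek.
      by rewrite mulrCA Ek mulrA vtv.
    have [m [n Ev]] := Hdec vt HLv.
    have [_ Hu Hv] := Hlin m n; rewrite -Ev in Hu Hv.
    have Emh : m * h = n * Y.
      by apply/eqP; rewrite -subr_eq0; apply/eqP/(mulfI Kn0); rewrite -Hu vtu mulr0.
    have En : D2 * n = h.
      apply: (mulfI (mulf_neq0 Kn0 D1n0)).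
      transitivity (D2 * qdot vt v); first by rewrite Hv; ring.
      by rewrite vtv EP Eg; ring.
    have Em : m * D2 = Y.
      apply: (mulfI hn0); rewrite -{1}En.
      transitivity (D2 * (m * h)); first by rewrite -En; ring.
      by rewrite Emh -En; ring.
    rewrite dvdz_gcd; apply/andP; split; apply/dvdzP.
    + by exists n; rewrite -En mulrC.
    + by exists m; rewrite -Em.
  - have [h' Eh'] := dvdzP (dvdz_gcdl h Y).
    have [Y' EY'] := dvdzP (dvdz_gcdr h Y).
    move: Eh' EY'; rewrite -/e' => Eh' EY'.
    have e'n0 : e' != 0 by apply: contraNneq hn0 => e0; rewrite Eh' e0 mulr0.
    have h'n0 : h' != 0 by apply: contraNneq hn0 => e0; rewrite Eh' e0 mul0r.
    set w0 := qlin Y' a h' b.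
    have [HL Hu Hv] := Hlin Y' h'.
    have Hu0 : qdot w0 u = 0 by rewrite Hu Eh' EY'; ring.
    have ek : forall k, (k < 4)%N -> qcoord v k = qcoord w0 k * e'.
      move=> k Hk; have := HL k Hk; rewrite Hu0 Hv mul0r add0r EP Eg Eh' => E.
      apply: (mulfI (mulf_neq0 (mulf_neq0 Kn0 D1n0) h'n0)).
      by rewrite -E; ring.
    apply: dvd_gcd4; apply/dvdzP.
    + by exists (qx w0); exact: (ek 0%N isT).
    + by exists (qy w0); exact: (ek 1%N isT).
    + by exists (qz w0); exact: (ek 2%N isT).
    + by exists (qt w0); exact: (ek 3%N isT).
set L := (t * D1n)%N; set T := (t * hn)%N.
have LE : L%:Z = t%:Z * D1 by rewrite /L D1E PoszM.
have TE : T%:Z = t%:Z * h by rewrite /T hE PoszM.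
set pts := [seq qlin m a n%:Z b | n <- iota 0 T.+1, m <- mlist h (n%:Z * Y) L].
exists (size pts); split.
- exists pts; split; [|split; last by []].
  + apply: allpairs_uniq_dep; first exact: iota_uniq.
      by move=> n _; exact: mlist_uniq.
    move=> [n1 m1] [n2 m2] _ _ /= E.
    have [_ Hu1 Hv1] := Hlin m1 n1%:Z; have [_ Hu2 Hv2] := Hlin m2 n2%:Z.
    have en : n1 = n2.
      have : K * D1 * n1%:Z = K * D1 * n2%:Z by rewrite -Hv1 -Hv2 E.
      by move/(mulfI (mulf_neq0 Kn0 D1n0)) => [].
    subst n2.
    have em : m1 = m2.
      have : K * (m1 * h - n1%:Z * Y) = K * (m2 * h - n1%:Z * Y) by rewrite -Hu1 -Hu2 E.
      by move/(mulfI Kn0)/addIr/(mulIf hn0).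
    by subst m2.
  + move=> w; rewrite (@dil_iff R u v P t w Huv Huu Hvv HP tp); split.
    * move/allpairsPdep => [n [m [Hn Hm ->]]].
      have [HL Hu Hv] := Hlin m n%:Z.
      rewrite mem_iota add0n ltnS in Hn.
      have Hn' : n%:Z <= T%:Z by rewrite lez_nat.
      rewrite (mlistP _ _ _ _ hp) in Hm; move/andP: Hm => [m0 m1].
      split => //.
      - rewrite Hu; apply/andP; split; first nia.
        rewrite EP Eg; rewrite LE in m1; nia.
      - rewrite Hv; apply/andP; split; first nia.
        rewrite EP Eg; rewrite TE in Hn'; nia.
    * case=> HL /andP [s0 s1] /andP [r0 r1].
      have [m [n Ew]] := Hdec w HL; subst w.
      have [_ Hu Hv] := Hlin m n.
      rewrite Hu in s0 s1; rewrite Hv in r0 r1.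
      have n0 : 0 <= n by nia.
      apply/allpairsPdep; exists `|n|%N, m; split.
      - rewrite mem_iota add0n ltnS leq0n /= -lez_nat gez0_abs // TE.
        rewrite EP Eg in r1; nia.
      - rewrite (mlistP _ _ _ _ hp) gez0_abs // LE; apply/andP; split; first nia.
        rewrite EP Eg in s1; nia.
      - by rewrite gez0_abs.
- rewrite size_allpairs_dep.
  rewrite (eq_map (fun n => size_mlist h (n%:Z * Y) L)) sumn_shift sumn_ind.
  rewrite hE count_hY; last by rewrite -ltz_nat -hE.
  rewrite D2E -[(t * gcdn hn `|Y|).+1]addn1 -[T.+1]addn1 !(PoszD, PoszM) -hE -D1E Eg.
  ring.
Qed.

Lemma aux_le (x y : int) (n : nat) : 0 <= x -> 2 * x <= y -> 0 < y -> y <= (n.+1)%:Z -> x <= n%:Z.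
Proof. lia. Qed.

Lemma gbez (n : nat) : forall a1 a2 b1 b2 : int, (absz (b1 ^+ 2 + b2 ^+ 2)%R <= n)%N ->
  exists p1 p2 e1 e2 f1 f2 c1 c2 d1 d2 : int,
   [/\ a1 = c1 * p1 - c2 * p2, a2 = c1 * p2 + c2 * p1, b1 = d1 * p1 - d2 * p2,
       b2 = d1 * p2 + d2 * p1 &
       p1 = e1 * a1 - e2 * a2 + f1 * b1 - f2 * b2 /\ p2 = e1 * a2 + e2 * a1 + f1 * b2 + f2 * b1].
Proof.
have zero_case : forall a1 a2 : int, exists p1 p2 e1 e2 f1 f2 c1 c2 d1 d2 : int,
   [/\ a1 = c1 * p1 - c2 * p2, a2 = c1 * p2 + c2 * p1, 0 = d1 * p1 - d2 * p2,
       0 = d1 * p2 + d2 * p1 &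
       p1 = e1 * a1 - e2 * a2 + f1 * 0 - f2 * 0 /\ p2 = e1 * a2 + e2 * a1 + f1 * 0 + f2 * 0].
  by move=> a1 a2; exists a1, a2, 1, 0, 0, 0, 1, 0, 0, 0; split; try ring; split; ring.
have sq0 : forall b1 b2 : int, b1 ^+ 2 + b2 ^+ 2 = 0 -> b1 = 0 /\ b2 = 0.
  move=> b1 b2 /eqP; rewrite paddr_eq0 ?sqr_ge0 // !sqrf_eq0 => /andP [/eqP -> /eqP ->].
  by [].
elim: n => [|n IH] a1 a2 b1 b2 Hb.
  have [-> ->] : b1 = 0 /\ b2 = 0.
    by apply: sq0; apply/eqP; rewrite -absz_eq0 -leqn0.
  exact: zero_case.
have [/eqP /sq0 [-> ->]|bnz'] := boolP (b1 ^+ 2 + b2 ^+ 2 == 0).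
  exact: zero_case.
have bnz : 0 < b1 ^+ 2 + b2 ^+ 2 by rewrite lt0r bnz' addr_ge0 // sqr_ge0.
set nb := b1 ^+ 2 + b2 ^+ 2.
set X := a1 * b1 + a2 * b2; set Yv := a2 * b1 - a1 * b2.
set k1 := ((2 * X + nb) %/ (2 * nb))%Z; set k2 := ((2 * Yv + nb) %/ (2 * nb))%Z.
have nb2 : 0 < 2 * nb by rewrite mulr_gt0.
have nb2n : 2 * nb != 0 by rewrite gt_eqF.
have E1 := divz_eq (2 * X + nb) (2 * nb).
have E2 := divz_eq (2 * Yv + nb) (2 * nb).
have r10 := modz_ge0 (2 * X + nb) nb2n.
have r20 := modz_ge0 (2 * Yv + nb) nb2n.
have r11 := ltz_pmod (2 * X + nb) nb2.
have r21 := ltz_pmod (2 * Yv + nb) nb2.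
move: E1 E2 r10 r20 r11 r21; rewrite -/k1 -/k2.
set rho1 := ((2 * X + nb) %% (2 * nb))%Z; set rho2 := ((2 * Yv + nb) %% (2 * nb))%Z.
move=> E1 E2 r10 r20 r11 r21.
set d1 := X - k1 * nb; set d2 := Yv - k2 * nb.
have hd1 : 4 * d1 ^+ 2 <= nb ^+ 2.
  have e : 2 * d1 = (2 * X + nb) - k1 * (2 * nb) - nb by rewrite /d1; ring.
  rewrite {1}E1 in e.
  have e' : 2 * d1 = rho1 - nb by rewrite e; ring.
  have : 0 <= (nb - 2 * d1) * (nb + 2 * d1) by apply: mulr_ge0; rewrite e'; lia.
  have -> : (nb - 2 * d1) * (nb + 2 * d1) = nb ^+ 2 - 4 * d1 ^+ 2 by ring.
  by rewrite subr_ge0.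
have hd2 : 4 * d2 ^+ 2 <= nb ^+ 2.
  have e : 2 * d2 = (2 * Yv + nb) - k2 * (2 * nb) - nb by rewrite /d2; ring.
  rewrite {1}E2 in e.
  have e' : 2 * d2 = rho2 - nb by rewrite e; ring.
  have : 0 <= (nb - 2 * d2) * (nb + 2 * d2) by apply: mulr_ge0; rewrite e'; lia.
  have -> : (nb - 2 * d2) * (nb + 2 * d2) = nb ^+ 2 - 4 * d2 ^+ 2 by ring.
  by rewrite subr_ge0.
set r1 := a1 - (k1 * b1 - k2 * b2); set r2 := a2 - (k1 * b2 + k2 * b1).
have NR : (r1 ^+ 2 + r2 ^+ 2) * nb = d1 ^+ 2 + d2 ^+ 2.
  by rewrite /r1 /r2 /d1 /d2 /nb /X /Yv; ring.
have Hr : (absz (r1 ^+ 2 + r2 ^+ 2)%R <= n)%N.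
  set N := r1 ^+ 2 + r2 ^+ 2 in NR *.
  have h0 : 0 <= N by rewrite /N addr_ge0 // sqr_ge0.
  have h1' : (2 * N) * (2 * nb) <= nb * (2 * nb).
    have -> : (2 * N) * (2 * nb) = 4 * (N * nb) by ring.
    have -> : nb * (2 * nb) = 2 * nb ^+ 2 by ring.
    rewrite NR mulrDr (_ : 2 * nb ^+ 2 = nb ^+ 2 + nb ^+ 2); [exact: lerD | ring].
  have h1 : 2 * N <= nb by rewrite -(ler_pM2r nb2).
  move: Hb; rewrite -lez_nat -/nb (gez0_abs (ltW bnz)) => Hb.
  rewrite -lez_nat gez0_abs //; exact: (@aux_le _ _ n h0 h1 bnz Hb).
have [p1 [p2 [e1 [e2 [f1 [f2 [c1 [c2 [d1' [d2' [Hb1 Hb2 Hr1 Hr2 [Hp1 Hp2]]]]]]]]]]]] := IH b1 b2 r1 r2 Hr.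
exists p1, p2, f1, f2, (e1 - (f1 * k1 - f2 * k2)), (e2 - (f1 * k2 + f2 * k1)),
  (k1 * c1 - k2 * c2 + d1'), (k1 * c2 + k2 * c1 + d2'), c1, c2.
split => //.
- have -> : a1 = r1 + (k1 * b1 - k2 * b2) by rewrite /r1; ring.
  rewrite Hr1 Hb1 Hb2; ring.
- have -> : a2 = r2 + (k1 * b2 + k2 * b1) by rewrite /r2; ring.
  rewrite Hr2 Hb1 Hb2; ring.
- by split; [rewrite {1}Hp1 /r1 /r2; ring | rewrite {1}Hp2 /r1 /r2; ring].
Qed.

Definition qi : quat := Quat 0 1 0 0.

Lemma aux_one (np : int) : 0 <= np -> np != 0 -> ~ 1 < np -> np = 1.
Proof. move=> h1 /eqP h2 h3; have h3' : np <= 1 by rewrite leNgt; apply/negP. lia. Qed.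

Lemma sq0 (b1 b2 : int) : b1 ^+ 2 + b2 ^+ 2 = 0 -> b1 = 0 /\ b2 = 0.
Proof.
by move/eqP; rewrite paddr_eq0 ?sqr_ge0 // !sqrf_eq0 => /andP [/eqP -> /eqP ->].
Qed.

Lemma A_bez (q : quat) : qodd q -> no_gauss_right_divisor q ->
  exists al1 al2 al3 : int,
    al1 * qy (qmul (qmul q qi) (qconj q)) + al2 * qz (qmul (qmul q qi) (qconj q))
    + al3 * qt (qmul (qmul q qi) (qconj q)) = 1.
Proof.
case: q => [[[x y] z] t] Hodd Hng.
have [p1 [p2 [e1 [e2 [f1 [f2 [c1 [c2 [d1 [d2 [Hx Hy Hz Ht [Hp1 Hp2]]]]]]]]]]]] :=
  gbez (absz (z ^+ 2 + (- t) ^+ 2)%R) x y z (- t) (leqnn _).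
have Hnp : ~ 1 < p1 ^+ 2 + p2 ^+ 2.
  move=> H; apply: (Hng p1 p2 H); exists (Quat c1 c2 d1 (- d2)).
  have Et : t = - (d1 * p2 + d2 * p1) by rewrite -Ht opprK.
  rewrite Et Hx Hy Hz /qmul /Quat /qx /qy /qz /qt /=.
  congr (((_, _), _), _); ring.
have Np0 : p1 ^+ 2 + p2 ^+ 2 != 0.
  apply/negP => /eqP /sq0 [P1 P2].
  have Et : t = - (d1 * p2 + d2 * p1) by rewrite -Ht opprK.
  move: Hodd; rewrite Et Hx Hy Hz P1 P2 /qodd /qnorm /qx /qy /qz /qt /=.
  by rewrite !(mulr0, mul0r, subrr, addr0, oppr0, expr0n).
have N1 : p1 ^+ 2 + p2 ^+ 2 = 1.
  by apply: aux_one => //; rewrite addr_ge0 // sqr_ge0.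
set E1 := p1 * e1 + p2 * e2; set E2 := p1 * e2 - p2 * e1.
set F1 := p1 * f1 + p2 * f2; set F2 := p1 * f2 - p2 * f1.
have G1 : E1 * x - E2 * y + F1 * z - F2 * (- t) = 1.
  transitivity (p1 * (e1 * x - e2 * y + f1 * z - f2 * (- t)) +
                p2 * (e1 * y + e2 * x + f1 * (- t) + f2 * z)).
    by rewrite /E1 /E2 /F1 /F2; ring.
  by rewrite -Hp1 -Hp2 -N1; ring.
have G2 : E1 * y + E2 * x + F1 * (- t) + F2 * z = 0.
  transitivity (p1 * (e1 * y + e2 * x + f1 * (- t) + f2 * z) -
                p2 * (e1 * x - e2 * y + f1 * z - f2 * (- t))).
    by rewrite /E1 /E2 /F1 /F2; ring.
  by rewrite -Hp1 -Hp2; ring.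
set Aq := qmul (qmul (x, y, z, t) qi) (qconj (x, y, z, t)).
set Nq := x ^+ 2 + y ^+ 2 + z ^+ 2 + t ^+ 2.
set C0 := E1 ^+ 2 + E2 ^+ 2 + F1 ^+ 2 + F2 ^+ 2.
set C1 := E1 ^+ 2 + E2 ^+ 2 - F1 ^+ 2 - F2 ^+ 2.
set a2 := 2 * E1 * F2 - 2 * E2 * F1.
set a3 := - (2 * E1 * F1) - 2 * E2 * F2.
have Hid2 : 2 * ((E1 * x - E2 * y + F1 * z - F2 * (- t)) ^+ 2 +
                 (E1 * y + E2 * x + F1 * (- t) + F2 * z) ^+ 2) =
    C0 * Nq + C1 * qy Aq + a2 * qz Aq + a3 * qt Aq.
  rewrite /Aq /C0 /C1 /a2 /a3 /Nq /qmul /qconj /qi /Quat /qx /qy /qz /qt /=; ring.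
have HS : qy Aq ^+ 2 + qz Aq ^+ 2 + qt Aq ^+ 2 = Nq ^+ 2.
  rewrite /Aq /Nq /qmul /qconj /qi /Quat /qx /qy /qz /qt /=; ring.
have HA1 : qy Aq = Nq - 2 * (z ^+ 2 + t ^+ 2).
  rewrite /Aq /Nq /qmul /qconj /qi /Quat /qx /qy /qz /qt /=; ring.
rewrite G1 G2 in Hid2.
have Nq0 : 0 <= Nq by rewrite /Nq !addr_ge0 // sqr_ge0.
have [k Ek] : exists k : int, Nq = 2 * k + 1.
  have hodd : odd (absz Nq) by move: Hodd; rewrite /qodd /qnorm /qx /qy /qz /qt /=.
  set n0 := absz Nq in hodd *; set m := n0./2.
  have E : n0 = (1 + m * 2)%N by rewrite muln2 /m -{1}(odd_double_half n0) hodd.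
  exists m%:Z; rewrite -(gez0_abs Nq0) -/n0 E PoszD PoszM; ring.
move: Hid2 HS HA1; rewrite -/Nq.
move: (qy Aq) (qz Aq) (qt Aq) => A1 A2 A3 Hid2 HS HA1.
set k' := k - (z ^+ 2 + t ^+ 2).
set K' := k' ^+ 2 + k'.
exists (A1 - K' * (2 * C1 + C0 ^+ 2 * A1 + C0 * Nq * C1)),
  (- (K' * (2 * a2 + C0 ^+ 2 * A2 + C0 * Nq * a2))),
  (- (K' * (2 * a3 + C0 ^+ 2 * A3 + C0 * Nq * a3))).
set LA := C1 * A1 + a2 * A2 + a3 * A3.
have HL : LA = 2 - C0 * Nq.
  transitivity ((C0 * Nq + C1 * A1 + a2 * A2 + a3 * A3) - C0 * Nq); first by rewrite /LA; ring.
  by rewrite -Hid2; ring.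
transitivity (A1 ^+ 2 - K' * (2 * LA + C0 ^+ 2 * (A1 ^+ 2 + A2 ^+ 2 + A3 ^+ 2) + C0 * Nq * LA)).
  by rewrite /LA; ring.
rewrite HS HL.
have HA1' : A1 = 2 * k' + 1 by rewrite HA1 Ek /k'; ring.
rewrite HA1' /K'; ring.
Qed.

Definition uq q1 q2 := qmul (qmul q1 qj) (qconj q2).
Definition vq q1 q2 := qmul (qmul q1 qk) (qconj q2).
Definition Aq q := qmul (qmul q qi) (qconj q).

Ltac gunf := rewrite /uq /vq /Aq /mnr /qcoord /qdot /qnorm /qmul /qconj /qi /qj /qk /Quat /qx /qy /qz /qt /=.

Lemma id_dots q1 q2 : [/\ qdot (uq q1 q2) (vq q1 q2) = 0,
  qdot (uq q1 q2) (uq q1 q2) = qnorm q1 * qnorm q2 &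
  qdot (vq q1 q2) (vq q1 q2) = qnorm q1 * qnorm q2].
Proof.
case: q1 => [[[x1 y1] z1] t1]; case: q2 => [[[x2 y2] z2] t2].
by split; gunf; ring.
Qed.

Lemma id_m01 q1 q2 : 2 * mnr (uq q1 q2) (vq q1 q2) 0 1 = qnorm q2 * qy (Aq q1) - qnorm q1 * qy (Aq q2).
Proof.
case: q1 => [[[x1 y1] z1] t1]; case: q2 => [[[x2 y2] z2] t2]; gunf; ring.
Qed.
Lemma id_m23 q1 q2 : 2 * mnr (uq q1 q2) (vq q1 q2) 2 3 = qnorm q2 * qy (Aq q1) + qnorm q1 * qy (Aq q2).
Proof.
case: q1 => [[[x1 y1] z1] t1]; case: q2 => [[[x2 y2] z2] t2]; gunf; ring.
Qed.
Lemma id_m02 q1 q2 : 2 * mnr (uq q1 q2) (vq q1 q2) 0 2 = qnorm q2 * qz (Aq q1) - qnorm q1 * qz (Aq q2).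
Proof.
case: q1 => [[[x1 y1] z1] t1]; case: q2 => [[[x2 y2] z2] t2]; gunf; ring.
Qed.
Lemma id_m13 q1 q2 : 2 * mnr (uq q1 q2) (vq q1 q2) 1 3 = - (qnorm q2 * qz (Aq q1)) - qnorm q1 * qz (Aq q2).
Proof.
case: q1 => [[[x1 y1] z1] t1]; case: q2 => [[[x2 y2] z2] t2]; gunf; ring.
Qed.
Lemma id_m03 q1 q2 : 2 * mnr (uq q1 q2) (vq q1 q2) 0 3 = qnorm q2 * qt (Aq q1) - qnorm q1 * qt (Aq q2).
Proof.
case: q1 => [[[x1 y1] z1] t1]; case: q2 => [[[x2 y2] z2] t2]; gunf; ring.
Qed.
Lemma id_m12 q1 q2 : 2 * mnr (uq q1 q2) (vq q1 q2) 1 2 = qnorm q2 * qt (Aq q1) + qnorm q1 * qt (Aq q2).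
Proof.
case: q1 => [[[x1 y1] z1] t1]; case: q2 => [[[x2 y2] z2] t2]; gunf; ring.
Qed.

Lemma mnr_all u v (Q : int -> Prop) : Q 0 -> (forall x, Q x -> Q (- x)) ->
  Q (mnr u v 0 1) -> Q (mnr u v 0 2) -> Q (mnr u v 0 3) -> Q (mnr u v 1 2) ->
  Q (mnr u v 1 3) -> Q (mnr u v 2 3) -> forall i j, Q (mnr u v i j).
Proof.
move=> Q0 QN h01 h02 h03 h12 h13 h23 i j.
have anti : forall i j, mnr u v i j = - mnr u v j i by move=> i' j'; rewrite /mnr; ring.
have diag : forall i, mnr u v i i = 0 by move=> i'; rewrite /mnr; ring.
have out : forall i j, (4 <= i)%N -> mnr u v i j = 0.
  move=> i' j' Hi; have qc0 : forall q, qcoord q i' = 0 by move=> q; rewrite /qcoord nth_default.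
  by rewrite /mnr !qc0 mul0r mulr0 subrr.
case: (ltnP i 4) => Hi; last by rewrite out.
case: (ltnP j 4) => Hj; last by rewrite anti out // ; apply: QN.
case: i Hi => [|[|[|[|i]]]] // _; case: j Hj => [|[|[|[|j]]]] // _;
  rewrite ?diag //; try (rewrite anti; apply: QN); done.
Qed.

Lemma half_dvd (g x : int) : odd `|g|%N -> (g %| 2 * x)%Z -> (g %| x)%Z.
Proof.
move=> og; rewrite !dvdzE abszM.
by rewrite Gauss_dvdr // coprimen2.
Qed.

Lemma qnorm_pos q : qodd q -> 0 < qnorm q.
Proof.
move=> o; have : 0 <= qnorm q by rewrite /qnorm !addr_ge0 // sqr_ge0.
rewrite le0r => /orP [/eqP E|//]; by move: o; rewrite /qodd E.
Qed.

Lemma setup_main q1 q2 : qodd q1 -> qodd q2 -> no_gauss_right_divisor q1 -> no_gauss_right_divisor q2 ->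
  setup (uq q1 q2) (vq q1 q2) (qnorm q1 * qnorm q2) (gcdz (qnorm q1) (qnorm q2)).
Proof.
move=> o1 o2 n1 n2.
have [Huv Huu Hvv] := id_dots q1 q2.
have N1p := qnorm_pos q1 o1; have N2p := qnorm_pos q2 o2.
have gp : 0 < gcdz (qnorm q1) (qnorm q2).
  by rewrite /gcdz ltz_nat gcdn_gt0 absz_gt0 gt_eqF.
have gN1 := dvdz_gcdl (qnorm q1) (qnorm q2).
have gN2 := dvdz_gcdr (qnorm q1) (qnorm q2).
move: gp gN1 gN2; set g := gcdz _ _ => gp gN1 gN2.
have godd : odd `|g|%N.
  move: gN1; rewrite dvdzE => /dvdnP [c Ec].
  by move: o1; rewrite /qodd Ec oddM => /andP [].
split => //; first by rewrite mulr_gt0.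
split => //.
- exact: dvdz_mulr.
- apply: (mnr_all _ _ (fun x => (g %| x)%Z)) => [|x||||||]; first exact: dvdz0.
  + by rewrite -mulN1r; apply: dvdz_mull.
  + by apply: half_dvd => //; rewrite id_m01 dvdzB // dvdz_mulr.
  + by apply: half_dvd => //; rewrite id_m02 dvdzB // dvdz_mulr.
  + by apply: half_dvd => //; rewrite id_m03 dvdzB // dvdz_mulr.
  + by apply: half_dvd => //; rewrite id_m12 dvdzD // dvdz_mulr.
  + apply: half_dvd => //; rewrite id_m13 dvdzB // ?dvdz_mulr //.
    by rewrite -mulN1r dvdz_mull // dvdz_mulr.
  + by apply: half_dvd => //; rewrite id_m23 dvdzD // dvdz_mulr.
- rewrite /ideal_prop; move=> Qp HD HM HQ.
  have [al1 [al2 [al3 Hal]]] := A_bez q1 o1 n1.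
  have [be1 [be2 [be3 Hbe]]] := A_bez q2 o2 n2.
  have [xb [yb Hb]] := Bezoutz (qnorm q1) (qnorm q2).
  have -> : g = (yb * al1 - xb * be1) * mnr (uq q1 q2) (vq q1 q2) 0 1
     + (yb * al1 + xb * be1) * mnr (uq q1 q2) (vq q1 q2) 2 3
     + (yb * al2 - xb * be2) * mnr (uq q1 q2) (vq q1 q2) 0 2
     + (- (yb * al2) - xb * be2) * mnr (uq q1 q2) (vq q1 q2) 1 3
     + (yb * al3 - xb * be3) * mnr (uq q1 q2) (vq q1 q2) 0 3
     + (yb * al3 + xb * be3) * mnr (uq q1 q2) (vq q1 q2) 1 2.
    apply: (@mulfI _ 2) => //.
    set S := RHS.
    transitivity (2 * (yb * qnorm q2 * (al1 * qy (Aq q1) + al2 * qz (Aq q1) + al3 * qt (Aq q1))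
                    + xb * qnorm q1 * (be1 * qy (Aq q2) + be2 * qz (Aq q2) + be3 * qt (Aq q2)))).
      by rewrite /g -Hb; rewrite /Aq Hal Hbe; ring.
    rewrite /S.
    transitivity ((yb * al1 - xb * be1) * (2 * mnr (uq q1 q2) (vq q1 q2) 0 1)
     + (yb * al1 + xb * be1) * (2 * mnr (uq q1 q2) (vq q1 q2) 2 3)
     + (yb * al2 - xb * be2) * (2 * mnr (uq q1 q2) (vq q1 q2) 0 2)
     + (- (yb * al2) - xb * be2) * (2 * mnr (uq q1 q2) (vq q1 q2) 1 3)
     + (yb * al3 - xb * be3) * (2 * mnr (uq q1 q2) (vq q1 q2) 0 3)
     + (yb * al3 + xb * be3) * (2 * mnr (uq q1 q2) (vq q1 q2) 1 2)); last by ring.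
    rewrite id_m01 id_m23 id_m02 id_m13 id_m03 id_m12; ring.
  have T : forall c i j, (i < 4)%N -> (j < 4)%N -> Qp (c * mnr (uq q1 q2) (vq q1 q2) i j).
    by move=> c i j Hi Hj; apply: HM; apply: HQ.
  by do 5 (apply: (HD); last exact: (T)); exact: (T).
Qed.

Theorem theorem2p12 (R : rcfType) (q1 q2 : quat) :
  qodd q1 -> qodd q2 ->
  no_gauss_right_divisor q1 -> no_gauss_right_divisor q2 ->
  let u := qmul (qmul q1 qj) (qconj q2) in
  let v := qmul (qmul q1 qk) (qconj q2) in
  (exists a b : quat, is_lattice_basis R u v a b /\
     par_area R a b = (lcmz (qnorm q1) (qnorm q2))%:~R) /\
  (forall t : nat, (0 < t)%N ->
     exists n : nat, lattice_count R t [:: Quat 0 0 0 0; u; v; qadd u v] n /\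
       (n%:Z = gcdz (qnorm q1) (qnorm q2) * (t%:Z) ^+ 2
               + (gcd4 u + gcd4 v) * t%:Z + 1)).
Proof.
move=> o1 o2 n1 n2 u v.
have S : setup u v (qnorm q1 * qnorm q2) (gcdz (qnorm q1) (qnorm q2)) := setup_main q1 q2 o1 o2 n1 n2.
split; last by move=> t tp; exact: (count_main R _ _ _ _ t S tp).
have S' := S; case: S' => Huv Huu Hvv HP [Hg HgP Hgm Hid].
have Pn0 : qnorm q1 * qnorm q2 != 0 by rewrite gt_eqF.
have [a [b [K [h [Y [[EP Eg Kp hp D1p] [Hlin [Hdec Harea]]]]]]]] := lattice_data _ _ _ _ S.
exists a, b; split.
- have Ea : a = qlin 1 a 0 b by apply: quatE; rewrite /qlin /Quat /qx /qy /qz /qt /=; ring.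
  have Eb : b = qlin 0 a 1 b by apply: quatE; rewrite /qlin /Quat /qx /qy /qz /qt /=; ring.
  split; first by rewrite (@span_iff R u v _ a Huv Huu Hvv Pn0) Ea; case: (Hlin 1 0).
  split; first by rewrite (@span_iff R u v _ b Huv Huu Hvv Pn0) Eb; case: (Hlin 0 1).
  move=> w; rewrite (@span_iff R u v _ w Huv Huu Hvv Pn0); split.
  + move=> /Hdec [m [n ->]]; exists m, n => k Hk; exact: qcoord_lin.
  + case=> m [n Hw].
    have -> : w = qlin m a n b by apply: quatE4 => k Hk; rewrite qcoord_lin // Hw.
    by case: (Hlin m n).
- rewrite /par_area Harea.
  have -> : K = lcmz (qnorm q1) (qnorm q2).
    have gn0 : gcdz (qnorm q1) (qnorm q2) != 0 by rewrite gt_eqF.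
    apply: (mulIf gn0); rewrite -EP /lcmz /gcdz -PoszM muln_lcm_gcd PoszM.
    by rewrite !gez0_abs // ltW // qnorm_pos.
  rewrite rmorphXn /= sqrtr_sqr ger0_norm // ler0z /lcmz //.
Qed.
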